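(* Let $v$ satisfy the standing assumptions and the doubling condition, and let $g(x)=v(1-x^{-1})$. Fix $A>1$, set $b_0=1$ and inductively $b_{n+1}=\min\{l\in\mathbb{N}: g(2^l)>A\,g(2^{b_n})\}$. Then $u(z)=\operatorname{Re}\sum_{k=0}^\infty g(2^{b_k})z^{2^{b_k}}$, $z\in\mathbb{D}$, belongs to $h^\infty_v$.
   Context: Standing assumptions: $v:[0,1)\to[1,\infty)$ is positive, increasing, continuous, $v(0)=1$, $\lim_{r\to1}v(r)=+\infty$. Doubling condition: there is $D\ge1$ with $v(1-d)\le D\,v(1-2d)$ for all $d\in(0,1/2]$. $h^\infty_v$ is the set of real harmonic $u$ on $\mathbb{D}$ with $|u(z)|\le Kv(|z|)$ for some $K>0$. *)

(* Defs.v *)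
From Stdlib Require Import Reals Lra.
Open Scope R_scope.

(* Standing assumptions on the weight v : [0,1) -> [1,oo). Only values on [0,1) matter. *)
Definition standing_weight (v : R -> R) : Prop :=
  (forall r, 0 <= r < 1 -> 1 <= v r) /\
  (forall r s, 0 <= r -> r <= s -> s < 1 -> v r <= v s) /\
  (forall r, 0 <= r < 1 -> forall eps, 0 < eps -> exists delta, 0 < delta /\
      forall s, 0 <= s < 1 -> Rabs (s - r) < delta -> Rabs (v s - v r) < eps) /\
  v 0 = 1 /\
  (forall M, exists r0, r0 < 1 /\ forall r, r0 <= r < 1 -> M <= v r).

Definition doubling (v : R -> R) : Prop :=
  exists D, 1 <= D /\ forall d, 0 < d <= /2 -> v (1 - d) <= D * v (1 - 2 * d).

Definition gfun (v : R -> R) (x : R) : R := v (1 - / x).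

(* (x + i y)^n as a pair (real part, imaginary part) *)
Fixpoint cpow (x y : R) (n : nat) : R * R :=
  match n with
  | O => (1, 0)
  | S m => let (a, b) := cpow x y m in (a * x - b * y, a * y + b * x)
  end.

Definition in_disk (x y : R) : Prop := x * x + y * y < 1.

Definition cont2_on_disk (f : R -> R -> R) : Prop :=
  forall x y, in_disk x y -> forall eps, 0 < eps -> exists delta, 0 < delta /\
    forall x' y', Rabs (x' - x) < delta -> Rabs (y' - y) < delta ->
      Rabs (f x' y' - f x y) < eps.

Definition harmonic_on_disk (u : R -> R -> R) : Prop :=
  exists ux uy uxx uxy uyx uyy : R -> R -> R,
    (forall x y, in_disk x y ->
       derivable_pt_lim (fun t => u t y) x (ux x y) /\
       derivable_pt_lim (fun t => u x t) y (uy x y) /\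
       derivable_pt_lim (fun t => ux t y) x (uxx x y) /\
       derivable_pt_lim (fun t => ux x t) y (uxy x y) /\
       derivable_pt_lim (fun t => uy t y) x (uyx x y) /\
       derivable_pt_lim (fun t => uy x t) y (uyy x y) /\
       uxx x y + uyy x y = 0) /\
    cont2_on_disk u /\ cont2_on_disk ux /\ cont2_on_disk uy /\
    cont2_on_disk uxx /\ cont2_on_disk uxy /\ cont2_on_disk uyx /\ cont2_on_disk uyy.

Definition in_h_inf_v (v : R -> R) (u : R -> R -> R) : Prop :=
  harmonic_on_disk u /\
  exists K, 0 < K /\ forall x y, in_disk x y -> Rabs (u x y) <= K * v (sqrt (x * x + y * y)).

(* Main.v *)
Require Import Defs.
From Stdlib Require Import Reals Lra Lia Arith Classical ClassicalEpsilon.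
Open Scope R_scope.

Definition PP n x y := fst (cpow x y n).
Definition QQ n x y := snd (cpow x y n).

Lemma PP_S n x y : PP (S n) x y = PP n x y * x - QQ n x y * y.
Proof. unfold PP, QQ; simpl; destruct (cpow x y n); reflexivity. Qed.
Lemma QQ_S n x y : QQ (S n) x y = PP n x y * y + QQ n x y * x.
Proof. unfold PP, QQ; simpl; destruct (cpow x y n); reflexivity. Qed.
Lemma PP_0 x y : PP 0 x y = 1. Proof. reflexivity. Qed.
Lemma QQ_0 x y : QQ 0 x y = 0. Proof. reflexivity. Qed.

Lemma d_eq f x l l' : derivable_pt_lim f x l -> l = l' -> derivable_pt_lim f x l'.
Proof. intros H ->; exact H. Qed.
Lemma d_mult f g x a b : derivable_pt_lim f x a -> derivable_pt_lim g x b ->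
  derivable_pt_lim (fun t => f t * g t) x (a * g x + f x * b).
Proof. intros; exact (derivable_pt_lim_mult f g x a b H H0). Qed.
Lemma d_plus f g x a b : derivable_pt_lim f x a -> derivable_pt_lim g x b ->
  derivable_pt_lim (fun t => f t + g t) x (a + b).
Proof. intros; exact (derivable_pt_lim_plus f g x a b H H0). Qed.
Lemma d_minus f g x a b : derivable_pt_lim f x a -> derivable_pt_lim g x b ->
  derivable_pt_lim (fun t => f t - g t) x (a - b).
Proof. intros; exact (derivable_pt_lim_minus f g x a b H H0). Qed.
Lemma d_const c x : derivable_pt_lim (fun _ => c) x 0.
Proof. exact (derivable_pt_lim_const c x). Qed.
Lemma d_id x : derivable_pt_lim (fun t => t) x 1.
Proof. exact (derivable_pt_lim_id x). Qed.
Lemma d_scal c f x a : derivable_pt_lim f x a -> derivable_pt_lim (fun t => c * f t) x (c * a).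
Proof. intros H. eapply d_eq. apply d_mult. apply d_const. exact H. cbv beta; ring. Qed.
Lemma d_opp f x a : derivable_pt_lim f x a -> derivable_pt_lim (fun t => - f t) x (- a).
Proof. intros H. apply derivable_pt_lim_ext with (f := fun t => (-1) * f t).
  intro; ring. eapply d_eq. apply d_scal. exact H. ring. Qed.

Lemma dPQx n y x :
  derivable_pt_lim (fun t => PP (S n) t y) x (INR (S n) * PP n x y) /\
  derivable_pt_lim (fun t => QQ (S n) t y) x (INR (S n) * QQ n x y).
Proof.
  induction n as [|n [IH1 IH2]].
  - split.
    + apply derivable_pt_lim_ext with (f := fun t => 1 * t - 0 * y).
      intro z; cbv beta; rewrite PP_S; reflexivity.
      eapply d_eq. apply d_minus. apply d_scal, d_id. apply d_const. unfold PP, QQ; simpl; lra.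
    + apply derivable_pt_lim_ext with (f := fun t => 1 * y + 0 * t).
      intro z; cbv beta; rewrite QQ_S; reflexivity.
      eapply d_eq. apply d_plus. apply d_const. apply d_scal, d_id. unfold PP, QQ; simpl; lra.
  - split.
    + apply derivable_pt_lim_ext with (f := fun t => PP (S n) t y * t - QQ (S n) t y * y).
      intro z; cbv beta; rewrite (PP_S (S n)); reflexivity.
      eapply d_eq. apply d_minus. apply d_mult. exact IH1. apply d_id.
      apply d_mult. exact IH2. apply d_const.
      cbv beta; rewrite (PP_S n), (QQ_S n), !S_INR; ring.
    + apply derivable_pt_lim_ext with (f := fun t => PP (S n) t y * y + QQ (S n) t y * t).
      intro z; cbv beta; rewrite (QQ_S (S n)); reflexivity.
      eapply d_eq. apply d_plus. apply d_mult. exact IH1. apply d_const.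
      apply d_mult. exact IH2. apply d_id.
      cbv beta; rewrite (PP_S n), (QQ_S n), !S_INR; ring.
Qed.

Lemma dPQy n x y :
  derivable_pt_lim (fun t => PP (S n) x t) y (- (INR (S n) * QQ n x y)) /\
  derivable_pt_lim (fun t => QQ (S n) x t) y (INR (S n) * PP n x y).
Proof.
  induction n as [|n [IH1 IH2]].
  - split.
    + apply derivable_pt_lim_ext with (f := fun t => 1 * x - 0 * t).
      intro z; cbv beta; rewrite PP_S; reflexivity.
      eapply d_eq. apply d_minus. apply d_const. apply d_scal, d_id. unfold PP, QQ; simpl; lra.
    + apply derivable_pt_lim_ext with (f := fun t => 1 * t + 0 * x).
      intro z; cbv beta; rewrite QQ_S; reflexivity.
      eapply d_eq. apply d_plus. apply d_scal, d_id. apply d_const. unfold PP, QQ; simpl; lra.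
  - split.
    + apply derivable_pt_lim_ext with (f := fun t => PP (S n) x t * x - QQ (S n) x t * t).
      intro z; cbv beta; rewrite (PP_S (S n)); reflexivity.
      eapply d_eq. apply d_minus. apply d_mult. exact IH1. apply d_const.
      apply d_mult. exact IH2. apply d_id.
      cbv beta; rewrite (PP_S n), (QQ_S n), !S_INR; ring.
    + apply derivable_pt_lim_ext with (f := fun t => PP (S n) x t * t + QQ (S n) x t * x).
      intro z; cbv beta; rewrite (QQ_S (S n)); reflexivity.
      eapply d_eq. apply d_plus. apply d_mult. exact IH1. apply d_id.
      apply d_mult. exact IH2. apply d_const.
      cbv beta; rewrite (PP_S n), (QQ_S n), !S_INR; ring.
Qed.

Lemma PQ_norm n x y : PP n x y * PP n x y + QQ n x y * QQ n x y = (x*x+y*y)^n.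
Proof.
  induction n. simpl. rewrite PP_0, QQ_0; ring.
  rewrite PP_S, QQ_S. simpl. rewrite <- IHn. ring.
Qed.

Lemma PQ_bound n x y r : 0 <= r -> x*x+y*y <= r*r ->
  Rabs (PP n x y) <= r^n /\ Rabs (QQ n x y) <= r^n.
Proof.
  intros Hr Hq.
  assert (H : (x*x+y*y)^n <= (r^n)*(r^n)).
  { rewrite <- Rpow_mult_distr. apply pow_incr. split; [nra|lra]. }
  pose proof (PQ_norm n x y).
  assert (0 <= r^n) by (apply pow_le; lra).
  split; rewrite <- (Rabs_right (r^n)) by lra; apply Rsqr_le_abs_0; unfold Rsqr; nra.
Qed.

Definition cont2_at (f : R -> R -> R) x y := forall eps, 0 < eps -> exists delta, 0 < delta /\
  forall x' y', Rabs (x' - x) < delta -> Rabs (y' - y) < delta -> Rabs (f x' y' - f x y) < eps.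

Lemma cont2_ext f g x y : (forall a b, f a b = g a b) -> cont2_at f x y -> cont2_at g x y.
Proof. intros E H eps He. destruct (H eps He) as [d [Hd H1]]. exists d; split; auto.
  intros; rewrite <- !E; auto. Qed.

Lemma cont2_const c x y : cont2_at (fun _ _ => c) x y.
Proof. intros eps He; exists 1; split; [lra|]. intros; unfold Rminus; rewrite Rplus_opp_r, Rabs_R0; lra. Qed.

Lemma cont2_fst x y : cont2_at (fun a _ => a) x y.
Proof. intros eps He; exists eps; split; [lra|]. intros; auto. Qed.
Lemma cont2_snd x y : cont2_at (fun _ b => b) x y.
Proof. intros eps He; exists eps; split; [lra|]. intros; auto. Qed.

Lemma cont2_plus f g x y : cont2_at f x y -> cont2_at g x y -> cont2_at (fun a b => f a b + g a b) x y.
Proof.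
  intros Hf Hg eps He.
  destruct (Hf (eps/2)) as [d1 [Hd1 H1]]; [lra|].
  destruct (Hg (eps/2)) as [d2 [Hd2 H2]]; [lra|].
  exists (Rmin d1 d2); split; [apply Rmin_pos; auto|].
  intros x' y' Hx Hy.
  pose proof (Rmin_l d1 d2); pose proof (Rmin_r d1 d2).
  specialize (H1 x' y' ltac:(lra) ltac:(lra)); specialize (H2 x' y' ltac:(lra) ltac:(lra)).
  replace (f x' y' + g x' y' - (f x y + g x y)) with ((f x' y' - f x y) + (g x' y' - g x y)) by ring.
  eapply Rle_lt_trans; [apply Rabs_triang|]. lra.
Qed.

Lemma cont2_opp f x y : cont2_at f x y -> cont2_at (fun a b => - f a b) x y.
Proof. intros Hf eps He. destruct (Hf eps He) as [d [Hd H]]. exists d; split; auto.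
  intros. replace (- f x' y' - - f x y) with (- (f x' y' - f x y)) by ring. rewrite Rabs_Ropp; auto. Qed.

Lemma cont2_mult f g x y : cont2_at f x y -> cont2_at g x y -> cont2_at (fun a b => f a b * g a b) x y.
Proof.
  intros Hf Hg eps He.
  set (a := f x y); set (b := g x y).
  set (e1 := Rmin 1 (eps / (2 * (Rabs a + Rabs b + 1)))).
  assert (Hab : 0 < Rabs a + Rabs b + 1) by (pose proof (Rabs_pos a); pose proof (Rabs_pos b); lra).
  assert (He1 : 0 < e1).
  { apply Rmin_pos; [lra|]. apply Rdiv_lt_0_compat; lra. }
  assert (He1' : e1 * (Rabs a + Rabs b + 1) <= eps / 2).
  { assert (e1 <= eps / (2 * (Rabs a + Rabs b + 1))) by apply Rmin_r.
    apply Rmult_le_compat_r with (r := Rabs a + Rabs b + 1) in H; [|lra].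
    replace (eps / (2 * (Rabs a + Rabs b + 1)) * (Rabs a + Rabs b + 1)) with (eps/2) in H by (field; lra).
    exact H. }
  assert (e1 <= 1) by apply Rmin_l.
  destruct (Hf e1 He1) as [d1 [Hd1 H1]].
  destruct (Hg e1 He1) as [d2 [Hd2 H2]].
  exists (Rmin d1 d2); split; [apply Rmin_pos; auto|].
  intros x' y' Hx Hy.
  pose proof (Rmin_l d1 d2); pose proof (Rmin_r d1 d2).
  specialize (H1 x' y' ltac:(lra) ltac:(lra)); specialize (H2 x' y' ltac:(lra) ltac:(lra)).
  fold a in H1; fold b in H2. fold a b.
  replace (f x' y' * g x' y' - a * b) with (f x' y' * (g x' y' - b) + b * (f x' y' - a)) by ring.
  eapply Rle_lt_trans; [apply Rabs_triang|]. rewrite !Rabs_mult.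
  assert (Rabs (f x' y') <= Rabs a + 1).
  { replace (f x' y') with (a + (f x' y' - a)) by ring.
    eapply Rle_trans; [apply Rabs_triang|]. lra. }
  assert (Rabs (f x' y') * Rabs (g x' y' - b) <= (Rabs a + 1) * e1).
  { apply Rmult_le_compat; try apply Rabs_pos; lra. }
  assert (Rabs b * Rabs (f x' y' - a) <= Rabs b * e1).
  { apply Rmult_le_compat_l; [apply Rabs_pos|lra]. }
  nra.
Qed.

Lemma cont2_PQ n x y : cont2_at (PP n) x y /\ cont2_at (QQ n) x y.
Proof.
  revert x y; induction n; intros x y.
  - split; [apply cont2_ext with (f := fun _ _ => 1)|apply cont2_ext with (f := fun _ _ => 0)];
     try (intros; reflexivity); apply cont2_const.
  - split.
    + apply cont2_ext with (f := fun a b => PP n a b * a + - (QQ n a b * b)).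
      intros; rewrite PP_S; ring.
      apply cont2_plus; [apply cont2_mult|apply cont2_opp, cont2_mult].
      apply IHn. apply cont2_fst. apply IHn. apply cont2_snd.
    + apply cont2_ext with (f := fun a b => PP n a b * b + QQ n a b * a).
      intros; rewrite QQ_S; ring.
      apply cont2_plus; apply cont2_mult; try apply IHn. apply cont2_snd. apply cont2_fst.
Qed.

Lemma cont2_scal c f x y : cont2_at f x y -> cont2_at (fun a b => c * f a b) x y.
Proof. intros; apply cont2_mult; auto; apply cont2_const. Qed.

Definition psum (F : nat -> R -> R -> R) N x y := sum_f_R0 (fun k => F k x y) N.
Definition slim (f : nat -> R) : R := epsilon (inhabits 0) (fun l => Un_cv f l).
Definition Ssum F x y := slim (fun N => psum F N x y).

Lemma slim_spec f l : Un_cv f l -> Un_cv f (slim f).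
Proof. intro H. unfold slim. apply epsilon_spec. exists l; exact H. Qed.

Definition Mbound (F : nat -> R -> R -> R) := forall p, 0 <= p < 1 ->
  exists M : nat -> R, exists lM, Un_cv (fun N => sum_f_R0 M N) lM /\
    forall k x y, x*x+y*y <= p -> Rabs (F k x y) <= M k.

Lemma Mb_conv F x y : Mbound F -> x*x+y*y < 1 -> Un_cv (fun N => psum F N x y) (Ssum F x y).
Proof.
  intros HF Hq.
  destruct (HF (x*x+y*y)) as [M [lM [HM HB]]]; [split; [nra|lra]|].
  assert (Habs : { l | Un_cv (fun N => sum_f_R0 (fun k => Rabs (F k x y)) N) l }).
  { apply Rseries_CV_comp with (Bn := M). intro n; split; [apply Rabs_pos| apply HB; lra].
    exists lM; exact HM. }
  assert (Hs : { l | Un_cv (fun N => sum_f_R0 (fun k => F k x y) N) l }).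
  { apply cv_cauchy_2, cauchy_abs, cv_cauchy_1. exact Habs. }
  destruct Hs as [l Hl]. unfold Ssum. apply slim_spec with l. exact Hl.
Qed.

Lemma Mb_unif F p : Mbound F -> 0 <= p < 1 -> forall eps, 0 < eps -> exists N, forall n, (N <= n)%nat ->
  forall x y, x*x+y*y <= p -> Rabs (Ssum F x y - psum F n x y) < eps.
Proof.
  intros HF Hp eps He.
  destruct (HF p Hp) as [M [lM [HM HB]]].
  destruct (HM eps He) as [N HN]. exists N. intros n Hn x y Hq.
  assert (Hc : Un_cv (fun N => psum F N x y) (Ssum F x y)) by (apply Mb_conv; auto; lra).
  pose proof (sum_maj1 (fun k _ => F k x y) M 0 (Ssum F x y) lM n Hc HM (fun k => HB k x y Hq)) as H.
  unfold SP in H. unfold psum.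
  specialize (HN n Hn). unfold Rdist in HN.
  eapply Rle_lt_trans; [exact H|].
  rewrite Rabs_minus_sym in HN. pose proof (Rle_abs (lM - sum_f_R0 M n)). lra.
Qed.

Lemma nbhd x y : x*x+y*y < 1 -> exists d p, 0 < d /\ 0 <= p < 1 /\
  forall x' y', Rabs (x'-x) < d -> Rabs (y'-y) < d -> x'*x'+y'*y' <= p.
Proof.
  intros Hq. set (q := x*x+y*y) in *.
  exists (Rmin 1 ((1-q)/12)), ((1+q)/2).
  assert (Hd : 0 < Rmin 1 ((1-q)/12)) by (apply Rmin_pos; lra).
  split; [exact Hd|]. split; [unfold q in *; split; nra|].
  intros x' y' Hx Hy.
  pose proof (Rmin_l 1 ((1-q)/12)); pose proof (Rmin_r 1 ((1-q)/12)).
  set (d := Rmin 1 ((1-q)/12)) in *.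
  apply Rabs_def2 in Hx; apply Rabs_def2 in Hy.
  assert (-1 < x < 1) by (unfold q in *; nra).
  assert (-1 < y < 1) by (unfold q in *; nra).
  assert (x'*x' <= x*x + 3*d) by nra.
  assert (y'*y' <= y*y + 3*d) by nra.
  unfold q in *; lra.
Qed.

Lemma psum_cont F N x y : (forall k a b, cont2_at (F k) a b) -> cont2_at (psum F N) x y.
Proof.
  intros HF. induction N.
  - apply cont2_ext with (f := F 0%nat); [reflexivity|apply HF].
  - apply cont2_ext with (f := fun a b => psum F N a b + F (S N) a b); [reflexivity|].
    apply cont2_plus; auto.
Qed.

Lemma abs3 a b c : Rabs (a + b - c) <= Rabs a + Rabs b + Rabs c.
Proof. unfold Rminus. eapply Rle_trans; [apply Rabs_triang|]. rewrite Rabs_Ropp.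
  pose proof (Rabs_triang a b). lra. Qed.

Lemma Mb_cont F : Mbound F -> (forall k a b, cont2_at (F k) a b) -> cont2_on_disk (Ssum F).
Proof.
  intros HF Hc x y Hxy eps He.
  destruct (nbhd x y Hxy) as [d0 [p [Hd0 [Hp Hn]]]].
  destruct (Mb_unif F p HF Hp (eps/3)) as [N HN]; [lra|].
  destruct (psum_cont F N x y Hc (eps/3)) as [d1 [Hd1 H1]]; [lra|].
  exists (Rmin d0 d1); split; [apply Rmin_pos; auto|].
  intros x' y' Hx Hy.
  pose proof (Rmin_l d0 d1); pose proof (Rmin_r d0 d1).
  assert (Hq' : x'*x'+y'*y' <= p) by (apply Hn; lra).
  assert (Hq : x*x+y*y <= p) by (apply Hn; unfold Rminus; rewrite Rplus_opp_r, Rabs_R0; lra).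
  pose proof (HN N (le_n N) x' y' Hq'); pose proof (HN N (le_n N) x y Hq).
  specialize (H1 x' y' ltac:(lra) ltac:(lra)).
  replace (Ssum F x' y' - Ssum F x y) with
    ((Ssum F x' y' - psum F N x' y') + (psum F N x' y' - psum F N x y) - (Ssum F x y - psum F N x y)) by ring.
  eapply Rle_lt_trans; [apply abs3|]. lra.
Qed.

Lemma psum_deriv F G y n x : (forall k x, derivable_pt_lim (fun t => F k t y) x (G k x y)) ->
  derivable_pt_lim (fun t => psum F n t y) x (psum G n x y).
Proof.
  intro HD. induction n.
  - exact (HD 0%nat x).
  - exact (d_plus _ _ x _ _ IHn (HD (S n) x)).
Qed.

Lemma Mb_dx F G : Mbound F -> Mbound G ->
  (forall k y x, derivable_pt_lim (fun t => F k t y) x (G k x y)) ->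
  forall x y, in_disk x y -> derivable_pt_lim (fun t => Ssum F t y) x (Ssum G x y).
Proof.
  intros HF HG HD x y Hxy.
  destruct (nbhd x y Hxy) as [d0 [p [Hd0 [Hp Hn]]]].
  assert (HB : forall t, Boule x (mkposreal d0 Hd0) t -> t*t+y*y <= p).
  { intros t Ht. unfold Boule in Ht; simpl in Ht. apply Hn; auto.
    unfold Rminus; rewrite Rplus_opp_r, Rabs_R0; lra. }
  apply (CVU_derivable (fun n t => psum F n t y) (fun n t => psum G n t y)
     (fun t => Ssum F t y) (fun t => Ssum G t y) x (mkposreal d0 Hd0)).
  - intros eps He. destruct (Mb_unif G p HG Hp eps He) as [N HN].
    exists N. intros n t Hn' Ht. apply HN; auto.
  - intros t Ht. apply Mb_conv; auto. specialize (HB t Ht); lra.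
  - intros n t _. apply psum_deriv. intros; apply HD.
  - unfold Boule; simpl. unfold Rminus; rewrite Rplus_opp_r, Rabs_R0; lra.
Qed.

Definition swap (F : nat -> R -> R -> R) := fun k a b => F k b a.

Lemma Mb_swap F : Mbound F -> Mbound (swap F).
Proof.
  intros HF p Hp. destruct (HF p Hp) as [M [lM [HM HB]]].
  exists M, lM; split; auto. intros k x y Hq. unfold swap. apply HB. lra.
Qed.

Lemma Mb_dy F G : Mbound F -> Mbound G ->
  (forall k x y, derivable_pt_lim (fun t => F k x t) y (G k x y)) ->
  forall x y, in_disk x y -> derivable_pt_lim (fun t => Ssum F x t) y (Ssum G x y).
Proof.
  intros HF HG HD x y Hxy.
  exact (Mb_dx (swap F) (swap G) (Mb_swap F HF) (Mb_swap G HG)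
     (fun k y x => HD k y x) y x ltac:(unfold in_disk in *; lra)).
Qed.

Lemma Mb_lap F G x y : Mbound F -> Mbound G -> (forall k a b, F k a b + G k a b = 0) ->
  in_disk x y -> Ssum F x y + Ssum G x y = 0.
Proof.
  intros HF HG H0 Hxy.
  pose proof (CV_plus _ _ _ _ (Mb_conv F x y HF Hxy) (Mb_conv G x y HG Hxy)) as H.
  apply UL_sequence with (Un := fun N => psum F N x y + psum G N x y); auto.
  assert (E : forall N, psum F N x y + psum G N x y = 0).
  { intro N; unfold psum; rewrite <- plus_sum. rewrite <- (sum_eq (fun _ => 0)).
    induction N; simpl; [lra|]. rewrite IHN; lra. intros; auto. }
  intros e He. exists 0%nat. intros n _. unfold Rdist. rewrite E. unfold Rminus; rewrite Rplus_opp_r, Rabs_R0; lra.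
Qed.

Lemma bernoulli n x : 0 <= x -> 1 + INR n * x <= (1 + x)^n.
Proof.
  intro Hx. induction n.
  - simpl; lra.
  - rewrite S_INR. simpl.
    assert (0 <= INR n) by apply pos_INR.
    assert (0 <= INR n * x * x) by (apply Rmult_le_pos; [apply Rmult_le_pos|]; lra).
    nra.
Qed.

Lemma bern (M : nat) : (1 <= M)%nat -> (1 - / INR M)^M <= /2.
Proof.
  intro HM. assert (HM' : 1 <= INR M) by (apply (le_INR 1); exact HM).
  set (x := / INR M).
  assert (Hx0 : 0 < x) by (unfold x; apply Rinv_0_lt_compat; lra).
  assert (Hx1 : x <= 1) by (unfold x; rewrite <- Rinv_1; apply Rinv_le_contravar; lra).
  assert (HMx : INR M * x = 1) by (unfold x; field; lra).
  pose proof (bernoulli M x ltac:(lra)) as Hb. rewrite HMx in Hb.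
  assert (Hp : (1 - x)^M * (1+x)^M <= 1).
  { rewrite <- Rpow_mult_distr. apply Rle_trans with (1^M); [apply pow_incr; nra | rewrite pow1; lra]. }
  assert (H0 : 0 <= (1 - x)^M) by (apply pow_le; lra).
  nra.
Qed.

Lemma sum_nonneg_ge (a : nat -> R) N j : (forall i, 0 <= a i) -> (j <= N)%nat -> a j <= sum_f_R0 a N.
Proof.
  intros Ha Hj. induction N.
  - inversion Hj; simpl; lra.
  - simpl. destruct (Nat.eq_dec j (S N)) as [->|Hne]; [pose proof (cond_pos_sum a N Ha); lra|].
    assert (j <= N)%nat by lia. specialize (IHN H). pose proof (Ha (S N)); lra.
Qed.

Lemma dexp_bound rho E : 0 <= rho < 1 -> 0 <= E -> exists C, forall j, E^j * rho^(Nat.pow 2 j) <= C.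
Proof.
  intros Hr HE.
  destruct (pow_lt_1_zero rho ltac:(rewrite Rabs_right; lra) (/(E+1)) ltac:(apply Rinv_0_lt_compat; lra)) as [N HN].
  set (a := fun j => E^j * rho^(Nat.pow 2 j)).
  assert (Ha0 : forall j, 0 <= a j) by (intro; unfold a; apply Rmult_le_pos; apply pow_le; lra).
  assert (Hstep : forall j, (N <= j)%nat -> a (S j) <= a j).
  { intros j Hj. unfold a.
    assert (Hlt : (j < Nat.pow 2 j)%nat) by (apply Nat.pow_gt_lin_r; lia).
    specialize (HN (Nat.pow 2 j) ltac:(lia)). rewrite Rabs_right in HN by (apply Rle_ge, pow_le; lra).
    assert (E * rho ^ Nat.pow 2 j <= 1).
    { apply Rmult_lt_compat_l with (r := E + 1) in HN; [|lra].
      rewrite Rinv_r in HN by lra. pose proof (pow_le rho (Nat.pow 2 j) ltac:(lra)). nra. }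
    replace (Nat.pow 2 (S j)) with (Nat.pow 2 j * 2)%nat by (simpl; lia).
    rewrite pow_mult. simpl.
    assert (0 <= E ^ j) by (apply pow_le; lra).
    assert (0 <= rho ^ Nat.pow 2 j) by (apply pow_le; lra).
    assert (0 <= E ^ j * rho ^ Nat.pow 2 j) by (apply Rmult_le_pos; lra).
    replace (E * E ^ j * (rho ^ Nat.pow 2 j * (rho ^ Nat.pow 2 j * 1))) with
      ((E ^ j * rho ^ Nat.pow 2 j) * (E * rho ^ Nat.pow 2 j)) by ring.
    nra. }
  exists (sum_f_R0 a N). intro j. fold (a j).
  destruct (le_lt_dec j N) as [Hj|Hj].
  - apply sum_nonneg_ge; auto.
  - assert (forall i, a (N + i)%nat <= a N).
    { induction i. rewrite Nat.add_0_r; lra.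
      eapply Rle_trans; [|exact IHi]. replace (N + S i)%nat with (S (N + i)) by lia. apply Hstep; lia. }
    replace j with (N + (j - N))%nat by lia. eapply Rle_trans; [apply H|].
    apply sum_nonneg_ge; auto.
Qed.

Lemma sum_shift (f : nat -> R) n : sum_f_R0 f (S n) = f 0%nat + sum_f_R0 (fun k => f (S k)) n.
Proof. induction n. simpl; ring. rewrite (tech5 f (S n)), IHn. simpl. ring. Qed.

Lemma geo_bound th n : 0 <= th < 1 -> sum_f_R0 (fun i => th^i) n <= / (1 - th).
Proof.
  intro H. pose proof (GP_finite th n) as E.
  assert (0 <= th ^ (n+1)) by (apply pow_le; lra).
  assert (S: sum_f_R0 (fun i => th^i) n = (1 - th^(n+1)) / (1 - th)) by (field_simplify_eq; [lra|lra]).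
  rewrite S. unfold Rdiv. assert (0 < /(1-th)) by (apply Rinv_0_lt_compat; lra). nra.
Qed.

Definition ndist (k p : nat) := ((k - p) + (p - k))%nat.

Lemma two_sided_aux th : 0 <= th < 1 -> forall p N,
  sum_f_R0 (fun k => th^(ndist k p)) N <= sum_f_R0 (fun i => th^i) p + th / (1 - th).
Proof.
  intros Hth p. induction p; intro N.
  - rewrite (sum_eq _ (fun k => th ^ k)).
    2:{ intros i _. unfold ndist. f_equal. lia. }
    pose proof (geo_bound th N Hth). simpl.
    replace (1 + th / (1 - th)) with (/(1-th)) by (field; lra). lra.
  - assert (Hc : 0 <= th / (1 - th)) by (unfold Rdiv; apply Rmult_le_pos; [lra|left; apply Rinv_0_lt_compat; lra]).
    destruct N.
    + simpl. unfold ndist; simpl. pose proof (cond_pos_sum (fun i => th^i) p (fun i => pow_le th i ltac:(lra))).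
      lra.
    + rewrite sum_shift. unfold ndist at 1. simpl (S p - 0)%nat; simpl (0 - S p)%nat.
      try rewrite Nat.add_0_r.
      specialize (IHp N).
      change (sum_f_R0 (fun k => th ^ ndist (S k) (S p)) N) with (sum_f_R0 (fun k => th ^ ndist k p) N).
      change (sum_f_R0 (fun i => th ^ i) (S p)) with (sum_f_R0 (fun i => th ^ i) p + th ^ S p).
      rewrite Nat.add_0_l. lra.
Qed.

Lemma two_sided th p N : 0 <= th < 1 -> sum_f_R0 (fun k => th^(ndist k p)) N <= 2 / (1 - th).
Proof.
  intro H. pose proof (two_sided_aux th H p N). pose proof (geo_bound th p H).
  replace (2 / (1 - th)) with (/(1-th) + (1 / (1-th))) by (field; lra).
  assert (th / (1-th) <= 1 / (1-th)). { unfold Rdiv. assert (0 < /(1-th)) by (apply Rinv_0_lt_compat; lra). nra. }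
  lra.
Qed.

Lemma zl_bounds (l : nat) : 0 <= 1 - / 2^l < 1.
Proof.
  assert (1 <= 2^l) by (apply pow_R1_Rle; lra).
  assert (0 < / 2^l) by (apply Rinv_0_lt_compat; lra).
  assert (/ 2^l <= 1) by (rewrite <- Rinv_1; apply Rinv_le_contravar; lra).
  lra.
Qed.

Lemma zl_mono (l l' : nat) : (l <= l')%nat -> 1 - / 2^l <= 1 - / 2^l'.
Proof.
  intro H. assert (1 <= 2^l) by (apply pow_R1_Rle; lra).
  assert (2^l <= 2^l') by (apply Rle_pow; auto; lra).
  assert (/ 2^l' <= / 2^l) by (apply Rinv_le_contravar; lra). lra.
Qed.

Lemma g_ge1 v l : standing_weight v -> 1 <= gfun v (2^l).
Proof. intros [H _]. apply H, zl_bounds. Qed.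

Lemma g_mono v l l' : standing_weight v -> (l <= l')%nat -> gfun v (2^l) <= gfun v (2^l').
Proof.
  intros [_ [H _]] Hl. unfold gfun. pose proof (zl_bounds l); pose proof (zl_bounds l').
  apply H; try lra. apply zl_mono; auto.
Qed.

Lemma g_0 v : standing_weight v -> gfun v (2^0) = 1.
Proof. intros [_ [_ [_ [H _]]]]. unfold gfun. simpl. replace (1 - / 1) with 0 by (field). exact H. Qed.

Lemma g_double v D l : (forall d, 0 < d <= /2 -> v (1 - d) <= D * v (1 - 2 * d)) ->
  gfun v (2^(S l)) <= D * gfun v (2^l).
Proof.
  intro H. unfold gfun.
  assert (1 <= 2^l) by (apply pow_R1_Rle; lra).
  replace (1 - / 2 ^ l) with (1 - 2 * / 2 ^ S l) by (simpl; field; lra).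
  apply H. simpl. split.
  - apply Rinv_0_lt_compat; lra.
  - rewrite Rinv_mult. assert (/ 2^l <= 1) by (rewrite <- Rinv_1; apply Rinv_le_contravar; lra).
    assert (0 < / 2^l) by (apply Rinv_0_lt_compat; lra). nra.
Qed.

Lemma g_iter v D l j : standing_weight v -> 0 <= D -> (forall d, 0 < d <= /2 -> v (1 - d) <= D * v (1 - 2 * d)) ->
  gfun v (2^(l + j)) <= D^j * gfun v (2^l).
Proof.
  intros Hs HD H. induction j.
  - rewrite Nat.add_0_r; simpl; lra.
  - replace (l + S j)%nat with (S (l + j)) by lia.
    eapply Rle_trans; [apply g_double; exact H|]. simpl. rewrite Rmult_assoc.
    apply Rmult_le_compat_l; auto.
Qed.

Lemma least_ex (P : nat -> Prop) : (exists n, P n) -> exists n, P n /\ forall m, (m < n)%nat -> ~ P m.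
Proof.
  intros [n Hn]. revert Hn. induction n as [n IH] using lt_wf_ind. intro Hn.
  destruct (classic (exists m, (m < n)%nat /\ P m)) as [[m [Hm Pm]]|Hno].
  - exact (IH m Hm Pm).
  - exists n; split; auto. intros m Hm Pm. apply Hno; eauto.
Qed.

Definition bhyp (v : R -> R) (A : R) (b : nat -> nat) := forall n, gfun v (2 ^ b (S n)) > A * gfun v (2 ^ b n) /\
     forall l : nat, gfun v (2 ^ l) > A * gfun v (2 ^ b n) -> (b (S n) <= l)%nat.

Lemma b_incr v A b n : standing_weight v -> 1 < A -> bhyp v A b -> (b n < b (S n))%nat.
Proof.
  intros Hs HA Hb. destruct (le_lt_dec (b (S n)) (b n)) as [H|H]; auto.
  exfalso. pose proof (g_mono v _ _ Hs H). pose proof (g_ge1 v (b n) Hs).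
  destruct (Hb n) as [Hg _]. nra.
Qed.

Lemma b_ge v A b k i : standing_weight v -> 1 < A -> bhyp v A b -> (b k + i <= b (k + i))%nat.
Proof.
  intros Hs HA Hb. induction i. rewrite !Nat.add_0_r; lia.
  pose proof (b_incr v A b (k + i) Hs HA Hb). replace (k + S i)%nat with (S (k+i)) by lia. lia.
Qed.

Lemma b_ge0 v A b k : standing_weight v -> 1 < A -> bhyp v A b -> b 0%nat = 1%nat -> (k + 1 <= b k)%nat.
Proof. intros Hs HA Hb H0. pose proof (b_ge v A b 0 k Hs HA Hb). simpl in H. lia. Qed.

Lemma c_ratio v A b k i : standing_weight v -> 1 < A -> bhyp v A b ->
  gfun v (2 ^ b k) * A ^ i <= gfun v (2 ^ b (k + i)%nat).
Proof.
  intros Hs HA Hb. induction i. rewrite Nat.add_0_r; simpl; lra.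
  replace (k + S i)%nat with (S (k+i)) by lia. destruct (Hb (k+i)%nat) as [H _].
  simpl. assert (0 <= A^i) by (apply pow_le; lra).
  pose proof (g_ge1 v (b k) Hs). nra.
Qed.

Lemma main_bound v D A b : standing_weight v -> 1 <= D ->
  (forall d, 0 < d <= /2 -> v (1 - d) <= D * v (1 - 2 * d)) -> 1 < A -> b 0%nat = 1%nat -> bhyp v A b ->
  exists K, 0 < K /\ forall r, 0 <= r < 1 -> forall N,
    sum_f_R0 (fun k => gfun v (2 ^ b k) * r ^ (Nat.pow 2 (b k))) N <= K * v r.
Proof.
  intros Hs HD Hdb HA Hb0 Hb.
  destruct (dexp_bound (/2) (2*D) ltac:(lra) ltac:(lra)) as [C HC].
  assert (HC0 : /2 <= C) by (specialize (HC 0%nat); simpl in HC; lra).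
  set (th := Rmax (/A) (/2)).
  assert (HAi : 0 < /A < 1) by (split; [apply Rinv_0_lt_compat; lra| rewrite <- Rinv_1; apply Rinv_lt_contravar; lra]).
  assert (Hth : 0 <= th < 1) by (unfold th; split; [pose proof (Rmax_r (/A) (/2)); lra| apply Rmax_lub_lt; lra]).
  assert (HthA : /A <= th) by apply Rmax_l.
  assert (Hth2 : /2 <= th) by apply Rmax_r.
  set (K1 := A + D * A * C).
  assert (HK1 : 0 < K1) by (unfold K1; assert (0 <= D * A * C) by (apply Rmult_le_pos; [apply Rmult_le_pos|]; lra); lra).
  assert (H1th : 0 < 2 / (1 - th)) by (unfold Rdiv; apply Rmult_lt_0_compat; [lra|apply Rinv_0_lt_compat; lra]).
  exists (K1 * (2 / (1 - th))). split; [apply Rmult_lt_0_compat; auto|].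
  intros r Hr N.
  destruct Hs as [Hs1 [Hs2 Hs3]].
  assert (Hs : standing_weight v) by (split; auto).
  assert (Hvr : 1 <= v r) by (apply Hs1; auto).
  destruct (least_ex (fun p => r < 1 - / 2 ^ b p)) as [p [Hp Hmin]].
  { destruct (pow_lt_1_zero (/2) ltac:(rewrite Rabs_right; lra) (1 - r) ltac:(lra)) as [M HM].
    exists M. specialize (HM (b M)). pose proof (b_ge0 v A b M Hs HA Hb Hb0).
    rewrite Rabs_right in HM by (apply Rle_ge, pow_le; lra). rewrite pow_inv in HM.
    specialize (HM ltac:(lia)). lra. }
  assert (Hcp : gfun v (2 ^ b p) <= D * A * v r).
  { destruct p as [|p'].
    - rewrite Hb0. eapply Rle_trans; [apply (g_double v D 0 Hdb)|]. rewrite (g_0 v Hs).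
      assert (D * 1 <= D * (A * v r)) by (apply Rmult_le_compat_l; nra). nra.
    - pose proof (b_ge0 v A b (S p') Hs HA Hb Hb0).
      destruct (b (S p')) as [|l] eqn:El; [lia|].
      assert (Hl : gfun v (2 ^ l) <= A * gfun v (2 ^ b p')).
      { destruct (Rle_dec (gfun v (2 ^ l)) (A * gfun v (2 ^ b p'))) as [Hle|Hgt]; auto.
        exfalso. destruct (Hb p') as [_ Hm]. specialize (Hm l ltac:(lra)). lia. }
      assert (Hp' : gfun v (2 ^ b p') <= v r).
      { assert (~ r < 1 - / 2 ^ b p') by (apply Hmin; lia).
        unfold gfun. apply Hs2; try lra. apply zl_bounds. }
      eapply Rle_trans; [apply (g_double v D l Hdb)|].
      assert (0 <= D) by lra.
      apply Rle_trans with (D * (A * gfun v (2 ^ b p'))); [apply Rmult_le_compat_l; auto|].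
      rewrite Rmult_assoc. apply Rmult_le_compat_l; auto. apply Rmult_le_compat_l; lra. }
  assert (Hterm : forall k, gfun v (2 ^ b k) * r ^ (Nat.pow 2 (b k)) <= th ^ (ndist k p) * (K1 * v r)).
  { intro k.
    assert (Hck : 1 <= gfun v (2 ^ b k)) by (apply g_ge1; auto).
    assert (Hrk0 : 0 <= r ^ (Nat.pow 2 (b k))) by (apply pow_le; lra).
    destruct (le_lt_dec p k) as [Hpk|Hkp].
    - set (i := (k - p)%nat).
      assert (Hd : ndist k p = i) by (unfold ndist, i; lia).
      rewrite Hd.
      pose proof (b_ge v A b p i Hs HA Hb) as Hbi. replace (p + i)%nat with k in Hbi by (unfold i; lia).
      set (j := (b k - b p)%nat).
      assert (Ebk : b k = (b p + j)%nat) by (unfold j; lia).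
      assert (Hij : (i <= j)%nat) by (unfold j; lia).
      assert (Hck' : gfun v (2 ^ b k) <= D ^ j * gfun v (2 ^ b p)).
      { rewrite Ebk. apply g_iter; auto; lra. }
      assert (Hrk : r ^ (Nat.pow 2 (b k)) <= (/2) ^ (Nat.pow 2 j)).
      { rewrite Ebk, Nat.pow_add_r, pow_mult.
        set (z := 1 - / 2 ^ b p). pose proof (zl_bounds (b p)) as Hz. fold z in Hz.
        apply Rle_trans with ((z ^ Nat.pow 2 (b p)) ^ Nat.pow 2 j).
        - rewrite <- !pow_mult. apply pow_incr. assert (r < z) by (unfold z; lra). lra.
        - apply pow_incr. split; [apply pow_le; lra|].
          assert (HM : (1 <= Nat.pow 2 (b p))%nat) by (pose proof (Nat.pow_nonzero 2 (b p)); lia).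
          pose proof (bern _ HM) as Hbe. rewrite pow_INR in Hbe.
          replace (INR 2) with 2 in Hbe by (simpl; ring). exact Hbe. }
      assert (HCj : D ^ j * (/2) ^ (Nat.pow 2 j) <= C * (/2) ^ j).
      { specialize (HC j). rewrite Rpow_mult_distr in HC.
        assert (E : D ^ j * (/2) ^ (Nat.pow 2 j) = (2 ^ j * D ^ j * (/2) ^ (Nat.pow 2 j)) * (/2)^j).
        { rewrite !pow_inv. field. split; apply pow_nonzero; lra. }
        rewrite E. apply Rmult_le_compat_r; [apply pow_le; lra|exact HC]. }
      assert (Hhalf : (/2) ^ j <= th ^ i).
      { replace j with (i + (j - i))%nat by lia. rewrite pow_add.
        assert ((/2) ^ (j - i) <= 1) by (apply Rle_trans with (1 ^ (j - i)); [apply pow_incr; lra|rewrite pow1; lra]).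
        assert (0 <= (/2) ^ i) by (apply pow_le; lra).
        assert ((/2) ^ i <= th ^ i) by (apply pow_incr; lra). nra. }
      assert (HDj : 0 <= D ^ j) by (apply pow_le; lra).
      assert (Hcp0 : 0 <= gfun v (2 ^ b p)) by (pose proof (g_ge1 v (b p) Hs); lra).
      assert (Hh0 : 0 <= (/2) ^ (Nat.pow 2 j)) by (apply pow_le; lra).
      assert (Hthi : 0 <= th ^ i) by (apply pow_le; lra).
      apply Rle_trans with (D ^ j * gfun v (2 ^ b p) * (/2) ^ (Nat.pow 2 j)).
      { apply Rmult_le_compat; lra. }
      replace (D ^ j * gfun v (2 ^ b p) * (/2) ^ (Nat.pow 2 j)) with
        (gfun v (2 ^ b p) * (D ^ j * (/2) ^ (Nat.pow 2 j))) by ring.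
      apply Rle_trans with (gfun v (2 ^ b p) * (C * th ^ i)).
      { apply Rmult_le_compat_l; auto. eapply Rle_trans; [exact HCj|].
        apply Rmult_le_compat_l; lra. }
      apply Rle_trans with (D * A * v r * (C * th ^ i)).
      { apply Rmult_le_compat_r; auto. apply Rmult_le_pos; lra. }
      unfold K1. assert (0 <= A * v r * th ^ i) by (apply Rmult_le_pos; [apply Rmult_le_pos|]; lra).
      nra.
    - set (i := (p - S k)%nat).
      assert (Hd : ndist k p = S i) by (unfold ndist, i; lia).
      rewrite Hd.
      pose proof (c_ratio v A b k i Hs HA Hb) as Hc.
      assert (Hv : gfun v (2 ^ b (k + i)%nat) <= v r).
      { assert (~ r < 1 - / 2 ^ b (k + i)%nat) by (apply Hmin; unfold i; lia).
        unfold gfun. apply Hs2; try lra. apply zl_bounds. }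
      assert (Hr1 : r ^ (Nat.pow 2 (b k)) <= 1).
      { apply Rle_trans with (1 ^ (Nat.pow 2 (b k))); [apply pow_incr; lra|rewrite pow1; lra]. }
      assert (HAi0 : 0 < A ^ i) by (apply pow_lt; lra).
      assert (Hck2 : gfun v (2 ^ b k) <= A * v r * (/A) ^ (S i)).
      { rewrite pow_inv. simpl. rewrite Rinv_mult.
        apply Rmult_le_reg_r with (A ^ i); auto.
        replace (A * v r * (/ A * / A ^ i) * A ^ i) with (v r) by (field; lra). lra. }
      assert (HAth : (/A) ^ (S i) <= th ^ (S i)) by (apply pow_incr; lra).
      assert (0 <= D * A * C) by (apply Rmult_le_pos; [apply Rmult_le_pos|]; lra).
      assert (0 <= th ^ S i) by (apply pow_le; lra).
      apply Rle_trans with (gfun v (2 ^ b k)).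
      { rewrite <- (Rmult_1_r (gfun v (2 ^ b k))) at 2. apply Rmult_le_compat_l; lra. }
      apply Rle_trans with (A * v r * th ^ (S i)).
      { eapply Rle_trans; [exact Hck2|]. apply Rmult_le_compat_l; auto. nra. }
      unfold K1. assert (0 <= th ^ S i * (D * A * C) * v r) by (apply Rmult_le_pos; [apply Rmult_le_pos|]; lra).
      replace (th ^ S i * ((A + D * A * C) * v r)) with (A * v r * th ^ S i + th ^ S i * (D * A * C) * v r) by ring.
      lra. }
  eapply Rle_trans; [apply sum_Rle; intros k _; apply Hterm|].
  rewrite <- scal_sum.
  pose proof (two_sided th p N Hth).
  assert (0 <= K1 * v r) by nra.
  replace (K1 * (2 / (1 - th)) * v r) with ((K1 * v r) * (2 / (1 - th))) by ring.
  apply Rmult_le_compat_l; auto.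
Qed.

Lemma nonneg_bounded_cv (M : nat -> R) B : (forall k, 0 <= M k) -> (forall N, sum_f_R0 M N <= B) ->
  exists l, Un_cv (fun N => sum_f_R0 M N) l.
Proof.
  intros H0 HB.
  assert (Hg : Un_growing (fun N => sum_f_R0 M N)).
  { intro n. simpl. pose proof (H0 (S n)); lra. }
  assert (Hub : has_ub (fun N => sum_f_R0 M N)).
  { exists B. intros x [i ->]. apply HB. }
  destruct (growing_cv _ Hg Hub) as [l Hl]. exists l; exact Hl.
Qed.

Lemma lim_abs_le s l B : Un_cv s l -> (forall N, Rabs (s N) <= B) -> Rabs l <= B.
Proof.
  intros Hs HB. destruct (Rle_dec (Rabs l) B) as [H|H]; auto. exfalso.
  destruct (Hs (Rabs l - B)) as [N HN]; [lra|].
  specialize (HN N (le_n N)). unfold Rdist in HN. specialize (HB N).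
  pose proof (Rabs_triang_inv l (s N)). rewrite Rabs_minus_sym in HN. lra.
Qed.


Definition mk (b : nat -> nat) k := (Nat.pow 2 (b k) - 2)%nat.

Lemma Enk (b : nat -> nat) k : (1 <= b k)%nat -> Nat.pow 2 (b k) = S (S (mk b k)).
Proof.
  intro H. unfold mk. destruct (b k) as [|l]; [lia|].
  rewrite Nat.pow_succ_r'. pose proof (Nat.pow_nonzero 2 l). lia.
Qed.

Lemma Mb_of v D A b (F : nat -> R -> R -> R) : standing_weight v -> 1 <= D ->
  (forall d, 0 < d <= /2 -> v (1 - d) <= D * v (1 - 2 * d)) -> 1 < A -> b 0%nat = 1%nat -> bhyp v A b ->
  (forall p, 0 <= p < 1 -> forall k x y, x*x+y*y <= p ->
     Rabs (F k x y) <= gfun v (2 ^ b k) * INR (S (S (mk b k))) ^ 2 * ((1+p)/2) ^ (mk b k)) ->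
  Mbound F.
Proof.
  intros Hs HD Hdb HA Hb0 Hb HF p Hp.
  set (rho := (1+p)/2).
  assert (Hrho : /2 <= rho < 1) by (unfold rho; lra).
  destruct (dexp_bound rho (8 * D) ltac:(lra) ltac:(lra)) as [C HC].
  assert (HC0 : 0 <= C) by (specialize (HC 0%nat); simpl in HC; pose proof (pow_le rho 1 ltac:(lra)); nra).
  set (M := fun k : nat => (/2) ^ k * (4 * C)).
  assert (HM0 : forall k, 0 <= M k) by (intro; unfold M; apply Rmult_le_pos; [apply pow_le; lra|lra]).
  destruct (nonneg_bounded_cv M (4 * C * 2) HM0) as [l Hl].
  { intro N. unfold M. rewrite <- scal_sum.
    pose proof (geo_bound (/2) N ltac:(lra)) as G. replace (/ (1 - /2)) with 2 in G by field.
    apply Rmult_le_compat_l. lra. exact G. }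
  exists M, l; split; [exact Hl|].
  intros k x y Hq. eapply Rle_trans; [apply (HF p Hp); auto|]. fold rho.
  pose proof (b_ge0 v A b k Hs HA Hb Hb0) as Hbk.
  assert (E : INR (S (S (mk b k))) = 2 ^ b k).
  { rewrite <- (Enk b k ltac:(lia)), pow_INR. simpl (INR 2). f_equal; ring. }
  rewrite E.
  assert (Hc : gfun v (2 ^ b k) <= D ^ b k).
  { pose proof (g_iter v D 0 (b k) Hs ltac:(lra) Hdb) as G. simpl (0 + b k)%nat in G.
    rewrite (g_0 v Hs), Rmult_1_r in G. exact G. }
  assert (Hc1 : 1 <= gfun v (2 ^ b k)) by (apply g_ge1; auto).
  set (N := Nat.pow 2 (b k)).
  assert (Hr : rho ^ (mk b k) <= 4 * rho ^ N).
  { unfold N; rewrite (Enk b k ltac:(lia)). simpl.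
    assert (0 <= rho ^ mk b k) by (apply pow_le; lra). assert (0 <= (4*(rho*rho) - 1) * rho ^ mk b k) by (apply Rmult_le_pos; nra). nra. }
  set (t := 2 ^ b k) in *.
  assert (Ht : 1 <= t) by (unfold t; apply pow_R1_Rle; lra).
  assert (HCk : t * t * t * D ^ b k * rho ^ N <= C).
  { specialize (HC (b k)). replace (8 * D) with (2 * 2 * 2 * D) in HC by ring.
    rewrite !Rpow_mult_distr in HC. exact HC. }
  assert (Hhalf : / t <= (/2) ^ k).
  { unfold t. rewrite <- pow_inv. replace (b k) with (k + (b k - k))%nat by lia. rewrite pow_add.
    assert ((/2) ^ (b k - k) <= 1) by (apply Rle_trans with (1 ^ (b k - k)); [apply pow_incr; lra|rewrite pow1; lra]).
    assert (0 <= (/2) ^ k) by (apply pow_le; lra). nra. }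
  assert (HDk : 0 <= D ^ b k) by (apply pow_le; lra).
  assert (HrN : 0 <= rho ^ N) by (apply pow_le; lra).
  assert (Hrm : 0 <= rho ^ mk b k) by (apply pow_le; lra).
  unfold M.
  apply Rle_trans with (D ^ b k * t ^ 2 * (4 * rho ^ N)).
  { apply Rmult_le_compat; try lra.
    - apply Rmult_le_pos; [lra| apply pow_le; lra].
    - apply Rmult_le_compat_r; [apply pow_le; lra|lra]. }
  replace (D ^ b k * t ^ 2 * (4 * rho ^ N)) with (4 * (t * t * t * D ^ b k * rho ^ N) * / t)
    by (field; lra).
  assert (0 < / t) by (apply Rinv_0_lt_compat; lra).
  assert (0 <= t * t * t * D ^ b k * rho ^ N) by (apply Rmult_le_pos; [repeat apply Rmult_le_pos|]; lra).
  apply Rle_trans with (4 * C * / t); [nra|].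
  rewrite Rmult_comm. apply Rmult_le_compat_r; lra.
Qed.

Lemma pow_le_dec rho m j : 0 <= rho <= 1 -> (m <= j)%nat -> rho ^ j <= rho ^ m.
Proof.
  intros H Hmj. replace j with (m + (j - m))%nat by lia. rewrite pow_add.
  assert (rho ^ (j - m) <= 1) by (apply Rle_trans with (1 ^ (j - m)); [apply pow_incr; lra|rewrite pow1; lra]).
  assert (0 <= rho ^ m) by (apply pow_le; lra). assert (0 <= rho ^ (j - m)) by (apply pow_le; lra). nra.
Qed.

Lemma fam_bound v b (F : nat -> R -> R -> R) (coef : nat -> R) (jj : nat -> nat) :
  (forall k, 0 <= coef k <= gfun v (2 ^ b k) * INR (S (S (mk b k))) ^ 2) ->
  (forall k, (mk b k <= jj k)%nat) ->
  (forall k x y, Rabs (F k x y) = coef k * Rabs (PP (jj k) x y) \/ Rabs (F k x y) = coef k * Rabs (QQ (jj k) x y)) ->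
  forall p, 0 <= p < 1 -> forall k x y, x*x+y*y <= p ->
     Rabs (F k x y) <= gfun v (2 ^ b k) * INR (S (S (mk b k))) ^ 2 * ((1+p)/2) ^ (mk b k).
Proof.
  intros Hc Hj HF p Hp k x y Hq.
  set (rho := (1+p)/2).
  assert (Hr : 0 <= rho <= 1) by (unfold rho; lra).
  assert (Hq' : x*x+y*y <= rho*rho) by (unfold rho; nra).
  destruct (PQ_bound (jj k) x y rho ltac:(lra) Hq') as [H1 H2].
  pose proof (pow_le_dec rho (mk b k) (jj k) Hr (Hj k)).
  specialize (Hc k).
  assert (0 <= rho ^ mk b k) by (apply pow_le; lra).
  destruct (HF k x y) as [E|E]; rewrite E.
  - apply Rle_trans with (coef k * rho ^ mk b k).
    + apply Rmult_le_compat_l; lra.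
    + apply Rmult_le_compat_r; lra.
  - apply Rle_trans with (coef k * rho ^ mk b k).
    + apply Rmult_le_compat_l; lra.
    + apply Rmult_le_compat_r; lra.
Qed.

Definition cc v (b : nat -> nat) k := gfun v (2 ^ b k).
Definition nn (b : nat -> nat) k := INR (S (S (mk b k))).
Definition F0 v b k x y := cc v b k * PP (Nat.pow 2 (b k)) x y.
Definition F1 v b k x y := (cc v b k * nn b k) * PP (S (mk b k)) x y.
Definition F2 v b k x y := - ((cc v b k * nn b k) * QQ (S (mk b k)) x y).
Definition F3 v b k x y := (cc v b k * nn b k * INR (S (mk b k))) * PP (mk b k) x y.
Definition F4 v b k x y := - ((cc v b k * nn b k * INR (S (mk b k))) * QQ (mk b k) x y).
Definition F6 v b k x y := - ((cc v b k * nn b k * INR (S (mk b k))) * PP (mk b k) x y).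

Lemma coef_le c n m : 0 <= c -> 1 <= m <= n ->
  c <= c * (n * (n * 1)) /\ c * n <= c * (n * (n * 1)) /\ c * n * m <= c * (n * (n * 1)).
Proof.
  intros Hc Hm. assert (0 <= n * n - 1) by nra. assert (0 <= n - 1) by lra.
  assert (0 <= n - m) by lra.
  assert (0 <= c * (n * n - 1)) by (apply Rmult_le_pos; lra).
  assert (0 <= c * n * (n - m)) by (apply Rmult_le_pos; [apply Rmult_le_pos|]; lra).
  assert (0 <= c * n * (n - 1)) by (apply Rmult_le_pos; [apply Rmult_le_pos|]; lra).
  repeat split; nra.
Qed.

Lemma abs_lin a z : 0 <= a -> Rabs (a * z) = a * Rabs z.
Proof. intro; rewrite Rabs_mult, Rabs_pos_eq; auto. Qed.
Lemma abs_lin' a z : 0 <= a -> Rabs (- (a * z)) = a * Rabs z.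
Proof. intro; rewrite Rabs_Ropp; apply abs_lin; auto. Qed.

Theorem lemma8 (v : R -> R) (A : R) (b : nat -> nat) :
  standing_weight v -> doubling v -> 1 < A ->
  b 0%nat = 1%nat ->
  (forall n, gfun v (2 ^ b (S n)) > A * gfun v (2 ^ b n) /\
     forall l : nat, gfun v (2 ^ l) > A * gfun v (2 ^ b n) -> (b (S n) <= l)%nat) ->
  exists u : R -> R -> R,
    (forall x y, in_disk x y ->
       Un_cv (fun N => sum_f_R0
                (fun k => gfun v (2 ^ b k) * fst (cpow x y (Nat.pow 2 (b k)))) N)
             (u x y)) /\
    in_h_inf_v v u.
Proof.
  intros Hs [D [HD Hdb]] HA Hb0 Hb'.
  assert (Hb : bhyp v A b) by exact Hb'.
  assert (Hb1 : forall k, (1 <= b k)%nat) by (intro k; pose proof (b_ge0 v A b k Hs HA Hb Hb0); lia).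
  assert (HE : forall k, Nat.pow 2 (b k) = S (S (mk b k))) by (intro k; apply Enk, Hb1).
  assert (Hc1 : forall k, 1 <= cc v b k) by (intro; apply g_ge1; auto).
  assert (Hn : forall k, 1 <= INR (S (mk b k)) <= nn b k).
  { intro k. unfold nn. split; [apply (le_INR 1); lia| apply le_INR; lia]. }
  assert (HMb : forall F coef jj,
    (forall k, 0 <= coef k <= gfun v (2 ^ b k) * INR (S (S (mk b k))) ^ 2) ->
    (forall k, (mk b k <= jj k)%nat) ->
    (forall k x y, Rabs (F k x y) = coef k * Rabs (PP (jj k) x y) \/ Rabs (F k x y) = coef k * Rabs (QQ (jj k) x y)) ->
    Mbound F).
  { intros F coef jj H1 H2 H3. apply (Mb_of v D A b F Hs HD Hdb HA Hb0 Hb).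
    apply (fam_bound v b F coef jj H1 H2 H3). }
  assert (HMb0 : Mbound (F0 v b)).
  { apply (HMb _ (cc v b) (fun k => Nat.pow 2 (b k))).
    - intro k. specialize (Hc1 k); specialize (Hn k). fold (cc v b k) (nn b k). split; [lra|]. simpl. apply (coef_le _ _ 1); lra.
    - intro k. rewrite HE. lia.
    - intros; left; apply abs_lin. specialize (Hc1 k); lra. }
  assert (HMb1 : Mbound (F1 v b)).
  { apply (HMb _ (fun k => cc v b k * nn b k) (fun k => S (mk b k))).
    - intro k. specialize (Hc1 k); specialize (Hn k). fold (cc v b k) (nn b k). split; [nra|]. simpl. apply (coef_le _ _ 1); lra.
    - intro k. lia.
    - intros; left; apply abs_lin. specialize (Hc1 k); specialize (Hn k); nra. }
  assert (HMb2 : Mbound (F2 v b)).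
  { apply (HMb _ (fun k => cc v b k * nn b k) (fun k => S (mk b k))).
    - intro k. specialize (Hc1 k); specialize (Hn k). fold (cc v b k) (nn b k). split; [nra|]. simpl. apply (coef_le _ _ 1); lra.
    - intro k. lia.
    - intros; right; apply abs_lin'. specialize (Hc1 k); specialize (Hn k); nra. }
  assert (Hco3 : forall k, 0 <= cc v b k * nn b k * INR (S (mk b k)) <= gfun v (2 ^ b k) * INR (S (S (mk b k))) ^ 2).
  { intro k. specialize (Hc1 k); specialize (Hn k). fold (cc v b k) (nn b k).
    assert (0 <= cc v b k * nn b k) by nra. split; [nra|]. replace (nn b k ^ 2) with (nn b k * (nn b k * 1)) by (simpl; ring). apply coef_le; lra. }
  assert (HMb3 : Mbound (F3 v b)).
  { apply (HMb _ _ (fun k => mk b k) Hco3). intro; lia.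
    intros; left; apply abs_lin. apply Hco3. }
  assert (HMb4 : Mbound (F4 v b)).
  { apply (HMb _ _ (fun k => mk b k) Hco3). intro; lia.
    intros; right; apply abs_lin'. apply Hco3. }
  assert (HMb6 : Mbound (F6 v b)).
  { apply (HMb _ _ (fun k => mk b k) Hco3). intro; lia.
    intros; left; apply abs_lin'. apply Hco3. }
  assert (D01 : forall k y x, derivable_pt_lim (fun t => F0 v b k t y) x (F1 v b k x y)).
  { intros k y x. apply derivable_pt_lim_ext with (f := fun t => cc v b k * PP (S (S (mk b k))) t y).
    intro z; unfold F0; rewrite HE; reflexivity.
    eapply d_eq. apply d_scal. apply (proj1 (dPQx (S (mk b k)) y x)). unfold F1, nn; ring. }
  assert (D02 : forall k x y, derivable_pt_lim (fun t => F0 v b k x t) y (F2 v b k x y)).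
  { intros k x y. apply derivable_pt_lim_ext with (f := fun t => cc v b k * PP (S (S (mk b k))) x t).
    intro z; unfold F0; rewrite HE; reflexivity.
    eapply d_eq. apply d_scal. apply (proj1 (dPQy (S (mk b k)) x y)). unfold F2, nn; ring. }
  assert (D13 : forall k y x, derivable_pt_lim (fun t => F1 v b k t y) x (F3 v b k x y)).
  { intros k y x. eapply d_eq. apply d_scal. apply (proj1 (dPQx (mk b k) y x)). unfold F3; ring. }
  assert (D14 : forall k x y, derivable_pt_lim (fun t => F1 v b k x t) y (F4 v b k x y)).
  { intros k x y. eapply d_eq. apply d_scal. apply (proj1 (dPQy (mk b k) x y)). unfold F4; ring. }
  assert (D24 : forall k y x, derivable_pt_lim (fun t => F2 v b k t y) x (F4 v b k x y)).
  { intros k y x. eapply d_eq. apply d_opp, d_scal. apply (proj2 (dPQx (mk b k) y x)). unfold F4; ring. }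
  assert (D26 : forall k x y, derivable_pt_lim (fun t => F2 v b k x t) y (F6 v b k x y)).
  { intros k x y. eapply d_eq. apply d_opp, d_scal. apply (proj2 (dPQy (mk b k) x y)). unfold F6; ring. }
  assert (Hcont : forall k a z, cont2_at (F0 v b k) a z /\ cont2_at (F1 v b k) a z /\ cont2_at (F2 v b k) a z /\ cont2_at (F3 v b k) a z /\ cont2_at (F4 v b k) a z /\ cont2_at (F6 v b k) a z).
  { intros k a z. repeat split.
    - exact (cont2_scal (cc v b k) _ a z (proj1 (cont2_PQ _ a z))).
    - exact (cont2_scal (cc v b k * nn b k) _ a z (proj1 (cont2_PQ _ a z))).
    - exact (cont2_opp (fun x y => (cc v b k * nn b k) * QQ (S (mk b k)) x y) a z
         (cont2_scal (cc v b k * nn b k) _ a z (proj2 (cont2_PQ _ a z)))).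
    - exact (cont2_scal (cc v b k * nn b k * INR (S (mk b k))) _ a z (proj1 (cont2_PQ _ a z))).
    - exact (cont2_opp (fun x y => (cc v b k * nn b k * INR (S (mk b k))) * QQ (mk b k) x y) a z
         (cont2_scal _ _ a z (proj2 (cont2_PQ _ a z)))).
    - exact (cont2_opp (fun x y => (cc v b k * nn b k * INR (S (mk b k))) * PP (mk b k) x y) a z
         (cont2_scal _ _ a z (proj1 (cont2_PQ _ a z)))). }
  exists (Ssum (F0 v b)). split.
  { intros x y Hxy. exact (Mb_conv (F0 v b) x y HMb0 Hxy). }
  split.
  - exists (Ssum (F1 v b)), (Ssum (F2 v b)), (Ssum (F3 v b)), (Ssum (F4 v b)), (Ssum (F4 v b)), (Ssum (F6 v b)).
    split.
    + intros x y Hxy. repeat split.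
      * apply Mb_dx; auto.
      * apply Mb_dy; auto.
      * apply Mb_dx; auto.
      * apply Mb_dy; auto.
      * apply Mb_dx; auto.
      * apply Mb_dy; auto.
      * apply Mb_lap; auto. intros k a z. unfold F3, F6; ring.
    + repeat split; apply Mb_cont; auto; intros k a z; apply Hcont.
  - destruct (main_bound v D A b Hs HD Hdb HA Hb0 Hb) as [K [HK HKb]].
    exists K; split; auto. intros x y Hxy.
    set (r := sqrt (x * x + y * y)).
    assert (Hq0 : 0 <= x * x + y * y) by nra.
    assert (Hr : 0 <= r < 1).
    { split; [apply sqrt_pos|]. unfold r. rewrite <- sqrt_1. apply sqrt_lt_1; auto; lra. }
    assert (Hrr : x * x + y * y <= r * r) by (unfold r; rewrite sqrt_sqrt; lra).
    apply lim_abs_le with (s := fun N => psum (F0 v b) N x y).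
    + apply Mb_conv; auto.
    + intro N. eapply Rle_trans; [apply Rabs_triang_gen|].
      eapply Rle_trans; [|apply (HKb r Hr N)].
      apply sum_Rle. intros k _. unfold F0. rewrite abs_lin by (specialize (Hc1 k); lra).
      apply Rmult_le_compat_l; [specialize (Hc1 k); unfold cc in Hc1; lra|].
      apply (PQ_bound _ x y r ltac:(lra) Hrr).
Qed.
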